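(* For every integer $n\geq 4$, the lexicographically smallest highly bispecial binary word of length $n$ is $001^{n-3}0$, except for $n=6$, for which the lexicographically smallest highly bispecial binary word of length $6$ is $001011$.
   Context: Words are over the binary alphabet $\{0,1\}$; the lexicographic order on words of the same length is induced by $0<1$. A factor of a word $u$ is any (possibly empty) contiguous block of $u$. A factor $x$ of $u$ is left special if both $0x$ and $1x$ are factors of $u$, right special if both $x0$ and $x1$ are factors of $u$, and bispecial if it is both left and right special (the empty word may be bispecial). A binary word of length $n$ is highly bispecial if its number of distinct bispecial factors is maximum among all binary words of length $n$. *)

(* Defs.v *)
From mathcomp Require Import all_boot.
Set Implicit Arguments. Unset Strict Implicit. Unset Printing Implicit Defensive.

(* Binary words: seq bool, with false = letter 0 and true = letter 1. *)

Definition factors (u : seq bool) : seq (seq bool) :=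
  [::] :: flatten [seq [seq take l (drop i u) | l <- iota 1 (size u - i)]
                  | i <- iota 0 (size u)].

Definition is_factor (x u : seq bool) : bool := infix x u.

Definition left_special (u x : seq bool) : bool :=
  is_factor (false :: x) u && is_factor (true :: x) u.
Definition right_special (u x : seq bool) : bool :=
  is_factor (rcons x false) u && is_factor (rcons x true) u.
Definition bispecial (u x : seq bool) : bool :=
  is_factor x u && left_special u x && right_special u x.

Definition num_bispecial (u : seq bool) : nat :=
  size (undup [seq x <- factors u | bispecial u x]).

Definition highly_bispecial (w : seq bool) : Prop :=
  forall v : seq bool, size v = size w -> num_bispecial v <= num_bispecial w.

Fixpoint lex_le (u v : seq bool) : bool :=
  match u, v with
  | [::], _ => true
  | _ :: _, [::] => false
  | a :: u', b :: v' => (~~ a && b) || ((a == b) && lex_le u' v')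
  end.

Definition lex_smallest_highly_bispecial (n : nat) (w : seq bool) : Prop :=
  [/\ size w = n, highly_bispecial w &
      forall v : seq bool, size v = n -> highly_bispecial v -> lex_le w v].

(* Main.v *)
Require Import Defs.
From mathcomp Require Import all_boot.
From mathcomp Require Import zify.
Set Implicit Arguments. Unset Strict Implicit. Unset Printing Implicit Defensive.

Lemma size_prefix (a l : seq bool) : prefix a l -> size a <= size l.
Proof. by move/prefixP=> [s ->]; rewrite size_cat leq_addr. Qed.

Lemma prefix_eq (a b l : seq bool) : prefix a l -> prefix b l -> size a = size b -> a = b.
Proof. by rewrite !prefixE => /eqP Ha /eqP Hb Hs; rewrite -Ha -Hb Hs. Qed.

Lemma prefix_sub (a b l : seq bool) : prefix a l -> prefix b l -> size a <= size b -> prefix a b.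
Proof.
rewrite !prefixE => /eqP Ha /eqP Hb Hs.
by rewrite -Hb take_takel // Ha.
Qed.

Lemma suffix_eq (a b l : seq bool) : suffix a l -> suffix b l -> size a = size b -> a = b.
Proof.
rewrite -!prefix_rev => Ha Hb Hs.
apply: (can_inj (@revK bool)); apply: prefix_eq Ha Hb _; by rewrite !size_rev.
Qed.

Lemma suffix_sub (a b l : seq bool) : suffix a l -> suffix b l -> size a <= size b -> suffix a b.
Proof.
rewrite -!prefix_rev => Ha Hb Hs.
apply: prefix_sub Ha Hb _; by rewrite !size_rev.
Qed.

Definition leaf (w z : seq bool) := ~~ infix (rcons z false) w && ~~ infix (rcons z true) w.

Fixpoint ext (w : seq bool) (f : nat) (y : seq bool) : seq bool :=
  if f is f'.+1 then
    if infix (rcons y false) w then ext w f' (rcons y false)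
    else if infix (rcons y true) w then ext w f' (rcons y true) else y
  else y.

Lemma ext_infix w f y : infix y w -> infix (ext w f y) w.
Proof.
elim: f y => [|f IH] y Hy //=.
case: ifP => H0; first exact: IH.
by case: ifP => H1; first exact: IH.
Qed.

Lemma ext_leaf w f y : infix y w -> size w - size y <= f -> leaf w (ext w f y).
Proof.
elim: f y => [|f IH] y Hy Hf /=.
  apply/andP; split; apply/negP => /size_infix; rewrite size_rcons; lia.
case: ifP => H0.
  apply: IH => //; move: (size_infix H0); rewrite size_rcons; lia.
case: ifP => H1.
  apply: IH => //; move: (size_infix H1); rewrite size_rcons; lia.
by rewrite /leaf H0 H1.
Qed.

Lemma ext_greedy w f y : prefix y (ext w f y) /\
  forall z b, prefix (rcons z b) (ext w f y) -> size y <= size z ->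
     infix (rcons z false) w -> b = false.
Proof.
elim: f y => [|f IH] y /=.
  split; first exact: prefix_refl.
  move=> z b /size_prefix; rewrite size_rcons => ? ?; exfalso; lia.
case: ifP => H0.
  have [IH1 IH2] := IH (rcons y false).
  split; first exact: prefix_trans (prefix_rcons y false) IH1.
  move=> z b Hp Hs Hz.
  case: (ltngtP (size z) (size y)) => Hzy.
  - by rewrite ltnNge Hs in Hzy.
  - by apply: IH2 Hp _ Hz; rewrite size_rcons.
  - have := prefix_eq Hp IH1; rewrite !size_rcons Hzy => /(_ erefl).
    by case/rcons_inj.
case: ifP => H1.
  have [IH1 IH2] := IH (rcons y true).
  split; first exact: prefix_trans (prefix_rcons y true) IH1.
  move=> z b Hp Hs Hz.
  case: (ltngtP (size z) (size y)) => Hzy.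
  - by rewrite ltnNge Hs in Hzy.
  - by apply: IH2 Hp _ Hz; rewrite size_rcons.
  - have := prefix_eq Hp IH1; rewrite !size_rcons Hzy => /(_ erefl).
    by case/rcons_inj => Ez _; rewrite Ez H0 in Hz.
split; first exact: prefix_refl.
move=> z b /size_prefix; rewrite size_rcons => ? ?; exfalso; lia.
Qed.

Lemma leaf_suffix w z : leaf w z -> infix z w -> suffix z w.
Proof.
move=> /andP [N0 N1] /infixP [p [q E]].
case: q E => [|c q] E.
  by rewrite E cats0 suffix_suffix.
have : infix (rcons z c) w.
  by rewrite E -cats1 -(cat1s c q) (catA z); apply: infix_infix.
by case: c {E}; rewrite ?(negbTE N0) ?(negbTE N1).
Qed.

Lemma leaf_size w z t b k : suffix t w -> size t = k.-1 -> infix (rcons t b) w ->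
  leaf w z -> infix z w -> k <= size z.
Proof.
move=> Ht Hs Htb Hl Hz.
rewrite leqNgt; apply/negP => Hlt.
have Hzt : suffix z t by apply: suffix_sub (leaf_suffix Hl Hz) Ht _; rewrite Hs -ltnS (ltn_predK Hlt).
move/suffixP: Hzt => [s Es].
have : infix (rcons z b) w.
  apply: infix_trans Htb; rewrite Es rcons_cat; exact: suffix_infix.
move: Hl => /andP [N0 N1]; case: b Htb => _; by [rewrite (negbTE N0) | rewrite (negbTE N1)].
Qed.

Lemma rs_bound w k (S : seq (seq bool)) : 0 < k ->
  (exists t b, [/\ suffix t w, size t = k.-1 & infix (rcons t b) w]) ->
  uniq S -> (forall x, x \in S -> infix (rcons x false) w && infix (rcons x true) w) ->
  size S <= size w - k.
Proof.
move=> k0 [t [b [Ht Hts Htb]]] US HS.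
set n := size w.
set E := ext w n.
have Einf y : infix y w -> infix (E y) w by apply: ext_infix.
have Eleaf y : infix y w -> leaf w (E y) by move=> Hy; apply: ext_leaf => //; lia.
set L0 := E [::].
have L0i : infix L0 w by apply: Einf; exact: infix0s.
have L0l : leaf w L0 by apply: Eleaf; exact: infix0s.
have kL0 : k <= size L0 by apply: leaf_size Ht Hts Htb L0l L0i.
have L0n : size L0 <= n by apply: size_infix.
set g := fun x => size (E (rcons x true)).
have Hg x : x \in S -> [/\ k <= g x, g x <= n & g x != size L0].
  move=> /HS /andP [H0 H1].
  have Hi := Einf _ H1; have Hl := Eleaf _ H1.
  split; first exact: leaf_size Ht Hts Htb Hl Hi.
    exact: size_infix.
  apply/eqP => Heq.
  have EE : E (rcons x true) = L0.
    apply: suffix_eq (leaf_suffix Hl Hi) (leaf_suffix L0l L0i) Heq.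
  have [P1 _] := ext_greedy w n (rcons x true).
  have [_ G2] := ext_greedy w n [::].
  move: P1; rewrite -/E EE => P1.
  by have := G2 x true P1 (leq0n _) H0.
have inj : {in S &, injective g}.
  move=> x x' Hx Hx' Heq.
  have /andP [H0 H1] := HS x Hx.
  have /andP [H0' H1'] := HS x' Hx'.
  have EE : E (rcons x true) = E (rcons x' true).
    apply: suffix_eq (leaf_suffix (Eleaf _ H1) (Einf _ H1)) (leaf_suffix (Eleaf _ H1') (Einf _ H1')) Heq.
  have [P1 G1] := ext_greedy w n (rcons x true).
  have [P1' G1'] := ext_greedy w n (rcons x' true).
  rewrite -/E in P1 G1 P1' G1'.
  rewrite EE in P1 G1.
  case: (ltngtP (size x) (size x')) => Hc.
  - by have := G1 x' true P1'; rewrite size_rcons => /(_ Hc H0').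
  - by have := G1' x true P1; rewrite size_rcons => /(_ Hc H0).
  - have := prefix_eq P1 P1'; rewrite !size_rcons Hc => /(_ erefl).
    by case/rcons_inj.
have U : uniq (map g S) by rewrite map_inj_in_uniq.
have Sub : {subset map g S <= rem (size L0) (iota k (n - k).+1)}.
  move=> y /mapP [x Hx ->]. have [a1 a2 a3] := Hg x Hx.
  rewrite mem_rem_uniq ?iota_uniq // inE a3 mem_iota /=.
  apply/andP; split => //; lia.
have := uniq_leq_size U Sub.
rewrite size_map size_rem ?size_iota // mem_iota.
apply/andP; split => //; lia.
Qed.

Lemma mem_factors x u : (x \in factors u) = infix x u.
Proof.
apply/idP/idP.
  rewrite /factors inE => /orP [/eqP -> | ]; first exact: infix0s.
  move/flattenP => [s /mapP [i _ ->] /mapP [l _ ->]].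
  exact: infix_trans (infix_take _ _) (infix_drop _ _).
case: x => [|a x]; first by rewrite inE.
move=> Hi; have Hs := size_infix Hi.
move/infixP: Hi => [p [q E]].
rewrite /factors inE; apply/orP; right.
apply/flattenP.
exists [seq take l (drop (size p) u) | l <- iota 1 (size u - size p)].
  apply/mapP; exists (size p) => //; rewrite mem_iota add0n E !size_cat /=; lia.
apply/mapP; exists (size (a :: x)).
  rewrite mem_iota E !size_cat /=; lia.
by rewrite E drop_size_cat // take_size_cat.
Qed.

Definition BS w := undup [seq x <- factors w | bispecial w x].

Lemma mem_BS w x : (x \in BS w) = bispecial w x.
Proof.
rewrite /BS mem_undup mem_filter mem_factors andbC.
case H: (bispecial w x); rewrite ?andbT ?andbF //.
by move: H; rewrite /bispecial /is_factor => /andP [/andP [-> _] _].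
Qed.

Lemma num_BS w : num_bispecial w = size (BS w).
Proof. by []. Qed.

Lemma num_bound w k : 0 < k ->
  (exists t b, [/\ suffix t w, size t = k.-1 & infix (rcons t b) w]) ->
  num_bispecial w <= size w - k.
Proof.
move=> k0 Ht; rewrite num_BS; apply: rs_bound k0 Ht _ _; first exact: undup_uniq.
by move=> x; rewrite mem_BS => /andP [_ H].
Qed.

Lemma num_bound_strict w k x0 : 0 < k ->
  (exists t b, [/\ suffix t w, size t = k.-1 & infix (rcons t b) w]) ->
  infix (rcons x0 false) w -> infix (rcons x0 true) w -> ~~ bispecial w x0 ->
  (num_bispecial w).+1 <= size w - k.
Proof.
move=> k0 Ht H0 H1 Nb; rewrite num_BS.
have := rs_bound (S := x0 :: BS w) k0 Ht.
apply => /=; first by rewrite mem_BS Nb undup_uniq.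
move=> x; rewrite inE => /orP [/eqP -> | ]; first by rewrite H0 H1.
by rewrite mem_BS => /andP [_ H].
Qed.

Lemma num_small w a : (forall b, ~~ infix [:: a; b] w) -> num_bispecial w <= 1.
Proof.
move=> Hn; rewrite num_BS.
have -> : 1 = size [:: [::] : seq bool] by [].
apply: uniq_leq_size; first exact: undup_uniq.
move=> x; rewrite mem_BS inE => /andP [/andP [_ /andP [L0 L1]] _].
case: x L0 L1 => [|y x] // L0 L1.
have : infix [:: a; y] w.
  apply: infix_trans (_ : infix _ (a :: y :: x)) _.
    exact: (prefix_infix [:: a; y] x).
  by case: a {Hn}; [exact: L1 | exact: L0].
by rewrite (negbTE (Hn y)).
Qed.

Lemma upper_bound w : 3 <= size w -> num_bispecial w <= size w - 2.
Proof.
case/lastP: w => [|w a] // Hs.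
case E: (infix [:: a; false] (rcons w a) || infix [:: a; true] (rcons w a)).
  have [b Hb] : exists b, infix [:: a; b] (rcons w a).
    by case/orP: E => H; [exists false | exists true].
  apply: num_bound => //; exists [:: a], b; split => //.
  by rewrite -cats1 suffix_suffix.
apply: leq_trans (num_small (a := a) _) _.
  by case; apply/negP => Hb; rewrite Hb ?orbT in E.
rewrite size_rcons ltnS in Hs; rewrite size_rcons subSS; by rewrite subn1 -ltnS (ltn_predK Hs).
Qed.

Lemma bispecial_rev w x : bispecial (rev w) (rev x) = bispecial w x.
Proof.
rewrite /bispecial /left_special /right_special /is_factor.
rewrite -!rev_rcons -!rev_cons !infix_rev.
by case: (infix x w); case: (infix (false :: x) w); case: (infix (true :: x) w);
   case: (infix (rcons x false) w); case: (infix (rcons x true) w).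
Qed.

Lemma num_rev w : num_bispecial (rev w) = num_bispecial w.
Proof.
rewrite !num_BS.
have -> : size (BS w) = size (map rev (BS w)) by rewrite size_map.
apply: perm_size; apply: uniq_perm; first exact: undup_uniq.
  rewrite map_inj_uniq ?undup_uniq //; exact: (can_inj (@revK bool)).
move=> x; rewrite mem_BS.
rewrite -{1}(revK x) bispecial_rev -mem_BS.
by rewrite -[in RHS](revK x) mem_map //; exact: (can_inj (@revK bool)).
Qed.

Lemma num_bound_rev w k : 0 < k ->
  (exists t b, [/\ prefix t w, size t = k.-1 & infix (b :: t) w]) ->
  num_bispecial w <= size w - k.
Proof.
move=> k0 [t [b [Ht Hs Hb]]].
rewrite -num_rev -(size_rev w); apply: num_bound => //.
exists (rev t), b; split.
- by rewrite suffix_rev.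
- by rewrite size_rev.
- by rewrite -rev_cons infix_rev.
Qed.

Lemma infix_nth (x v : seq bool) p : p + size x <= size v ->
  (forall j, j < size x -> nth false v (p + j) = nth false x j) -> infix x v.
Proof.
move=> Hs Hn.
have -> : x = take (size x) (drop p v).
  apply: (@eq_from_nth _ false).
    rewrite size_takel // size_drop; lia.
  move=> j Hj; rewrite nth_take ?nth_drop ?Hn //.
exact: infix_trans (infix_take _ _) (infix_drop _ _).
Qed.

Lemma infix3 (v : seq bool) p a b c : p + 3 <= size v ->
  nth false v p = a -> nth false v p.+1 = b -> nth false v p.+2 = c ->
  infix [:: a; b; c] v.
Proof.
move=> Hs Ha Hb Hc; apply: (infix_nth (p := p)) => //.
by case=> [|[|[|j]]] //= _; rewrite ?addn0 ?addn1 ?addn2.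
Qed.

Lemma infix4 (v : seq bool) p a b c d : p + 4 <= size v ->
  nth false v p = a -> nth false v p.+1 = b -> nth false v p.+2 = c ->
  nth false v p.+3 = d -> infix [:: a; b; c; d] v.
Proof.
move=> Hs Ha Hb Hc Hd; apply: (infix_nth (p := p)) => //.
by case=> [|[|[|[|j]]]] //= _; rewrite ?addn0 ?addn1 ?addn2 ?addn3.
Qed.

Lemma caseD m v q : size v = m.+4 ->
  nth false v 0 = false -> nth false v 1 = false -> nth false v 2 = true ->
  3 <= q <= m.+2 -> nth false v q.-1 = true -> nth false v q = false ->
  (forall c, ~~ infix [:: c; false; false] v) ->
  (forall b, ~~ infix [:: nth false v m.+2; nth false v m.+3; b] v) ->
  (exists b, infix [:: nth false v m.+3; b] v) ->
  num_bispecial v <= m.+1 \/ v = [:: false; false; true; false; true; true].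
Proof.
move=> Hs H0 H1 H2 /andP [Hq1 Hq2] Hqm Hq nA nC Hlast.
have [T2 T3] : nth false v m.+2 = true /\ nth false v m.+3 = true.
  move: nC; case E2: (nth false v m.+2); case E3: (nth false v m.+3) => // nC.
  - have Eq1 : q.-1.+1 = q by lia.
    have := nC (nth false v q.+1); rewrite (infix3 (p := q.-1)) ?Eq1 ?Hq //.
    rewrite Hs; lia.
  - have := nC (nth false v 3); rewrite (infix3 (p := 1)) //.
    by rewrite Hs.
  - have := nA (nth false v m.+1); rewrite (infix3 (p := m.+1)) //.
    by rewrite Hs addnC.
rewrite T2 T3 in nC.
have Alt : forall p, 1 <= p <= m.+2 -> nth false v p = ~~ odd p.
  elim=> [|p IH] // /andP [_ Hp].
  case: p IH Hp => [|p] IH Hp; first by rewrite H1.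
  have {}IH := IH (ltac:(apply/andP; split => //; lia)).
  rewrite /= -IH.
  case Ep: (nth false v p.+1); case Ep1: (nth false v p.+2) => //.
  - have := nC (nth false v p.+3); rewrite (infix3 (p := p.+1)) //.
    rewrite Hs; lia.
  - have := nA (nth false v p); rewrite (infix3 (p := p)) //.
    rewrite Hs; lia.
have Hodd : odd m = false.
  have := Alt m.+2 (ltac:(apply/andP; split => //; lia)).
  by rewrite T2 /= !negbK => /esym/negbTE.
case: m Hs T2 T3 nC Hlast Hq2 Alt Hodd => [|[|[|m]]] Hs T2 T3 nC Hlast Hq2 Alt Hodd //.
- lia.
- right.
  clear -Hs H0 H1 H2 T2 T3 Alt. case: v Hs H0 H1 H2 T2 T3 Alt => [|v0 [|v1 [|v2 [|v3 [|v4 [|v5 [|v6 v]]]]]]] //= Hs H0 H1 H2 T2 T3 Alt.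
  have := Alt 3 erefl; rewrite /= => H3.
  by rewrite H0 H1 H2 H3 T2 T3.
left.
rewrite -ltnS.
have := @num_bound_strict v 2 [:: true; false; true] erefl.
rewrite Hs subn2 /=; apply.
- move: Hlast => [b Hb]; exists [:: nth false v m.+3.+3], b; split => //.
  have -> : [:: nth false v m.+3.+3] = drop m.+3.+3 v.
    by rewrite (drop_nth false) ?Hs // drop_oversize // Hs.
  exact: suffix_drop.
- apply: (infix4 (p := 2)); rewrite ?Hs //.
  + by rewrite Alt.
  + by rewrite Alt //; lia.
  + by rewrite Alt //; lia.
- apply: (infix4 (p := m.+3)); rewrite ?Hs //.
  + lia.
  + by rewrite Alt //= ?Hodd //; lia.
  + by rewrite Alt //= ?Hodd //; lia.
- apply/negP => /andP [/andP [_ /andP [_ L1]] _].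
  have : infix [:: true; true; false] v.
    by apply: (@catr_infix _ [:: true]); exact: L1.
  by rewrite (negbTE (nC false)).
Qed.

Definition Wg m : seq bool := [:: false; false] ++ nseq m.+1 true ++ [:: false].

Lemma nseq_rcons k : rcons (nseq k true) true = nseq k.+1 true.
Proof. by elim: k => //= k ->. Qed.

Lemma P1 m k : k <= m.+1 -> infix (nseq k true) (Wg m).
Proof.
move=> Hk; apply: (@infix_trans _ (nseq m.+1 true)); last exact: infix_infix.
by rewrite -(subnKC Hk) nseqD; exact: prefix_infix.
Qed.

Lemma P2 m k : k <= m.+1 -> infix (false :: nseq k true) (Wg m).
Proof.
move=> Hk; apply: (@infix_trans _ (false :: nseq m.+1 true)).
  by rewrite -(subnKC Hk) nseqD -cat_cons; exact: prefix_infix.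
exact: (@infix_infix _ [:: false] (false :: nseq m.+1 true) [:: false]).
Qed.

Lemma P3 m k : k <= m.+1 -> infix (rcons (nseq k true) false) (Wg m).
Proof.
move=> Hk; apply: (@infix_trans _ (rcons (nseq m.+1 true) false)).
  by rewrite -(subnK Hk) nseqD rcons_cat; exact: suffix_infix.
rewrite -cats1; exact: (@suffix_infix _ [:: false; false]).
Qed.

Lemma bispecial_intro w x : infix x w -> infix (false :: x) w -> infix (true :: x) w ->
  infix (rcons x false) w -> infix (rcons x true) w -> bispecial w x.
Proof. by move=> H1 H2 H3 H4 H5; rewrite /bispecial /left_special /right_special /is_factor H1 H2 H3 H4 H5. Qed.

Lemma lower m : m.+2 <= num_bispecial (Wg m).
Proof.
rewrite num_BS.
set L : seq (seq bool) := [:: [::]; [:: false]] ++ [seq nseq k true | k <- iota 1 m].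
have -> : m.+2 = size L by rewrite /L size_cat size_map size_iota.
apply: uniq_leq_size.
  rewrite /L /=; apply/and3P; split.
  - rewrite inE negb_or /=; apply/mapP => [[k]]; rewrite mem_iota; case: k => //.
  - by apply/mapP => [[k]]; rewrite mem_iota; case: k => [|[|k]].
  - rewrite map_inj_in_uniq ?iota_uniq //.
    by move=> k k' _ _ /(congr1 size); rewrite !size_nseq.
move=> x; rewrite mem_BS /L mem_cat !inE => /orP [/orP [] /eqP -> | /mapP [k]].
- apply: bispecial_intro.
  + exact: infix0s.
  + exact: (P2 (k := 0)).
  + exact: (P1 (k := 1)).
  + exact: (P2 (k := 0)).
  + exact: (P1 (k := 1)).
- apply: bispecial_intro.
  + exact: (P2 (k := 0)).
  + exact: (@prefix_infix _ [:: false; false]).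
  + exact: (P3 (k := 1)).
  + exact: (@prefix_infix _ [:: false; false]).
  + exact: (P2 (k := 1)).
- rewrite mem_iota => /andP [Hk1 Hk2] ->.
  apply: bispecial_intro.
  + apply: P1; lia.
  + apply: P2; lia.
  + apply: (P1 (k := k.+1)); lia.
  + apply: P3; lia.
  + rewrite nseq_rcons; apply: P1; lia.
Qed.

Lemma lex_le_trans u v w : lex_le u v -> lex_le v w -> lex_le u w.
Proof.
elim: u v w => [|a u IH] [|b v] [|c w] //=.
by case: a; case: b; case: c => //=; apply: IH.
Qed.

Lemma lex_tail m s : size s = m.+1 -> ~~ lex_le (nseq m true ++ [:: false]) s ->
  exists i, [/\ i < m, nth false s i = false & forall j, j < i -> nth false s j = true].
Proof.
elim: m s => [|m IH] [|x s] //=.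
  by case: x.
move=> [Hs]; case: x => /= H.
  have [i [Hi Hn Hj]] := IH s Hs H.
  exists i.+1; split => //; case => // j /=; exact: Hj.
by exists 0.
Qed.

Lemma smaller_bad m v : size v = m.+4 -> ~~ lex_le (Wg m) v ->
  num_bispecial v <= m.+1 \/ v = [:: false; false; true; false; true; true].
Proof.
case: v => [|a [|b [|c s]]] // Hs Hlex.
have Hs' : size s = m.+1 by move: Hs => /= [].
have E3 : size [:: a, b, c & s] - 3 = m.+1 by rewrite Hs; lia.
rewrite /Wg /= in Hlex.
case: a Hlex Hs E3; case: b; case: c => //= Hlex Hs E3; last first.
  left; rewrite -E3; apply: num_bound_rev => //.
  exists [:: false; false], false; split => //.
  exact: (@prefix_infix _ [:: false; false; false]).
set v := [:: false, false, true & s].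
have [i [Hi Hni Hj]] := lex_tail Hs' Hlex.
case A: (infix [:: false; false; false] v || infix [:: true; false; false] v).
  left; rewrite -E3; apply: num_bound_rev => //.
  have [b Hb] : exists b, infix [:: b; false; false] v.
    by case/orP: A => H; [exists false | exists true].
  by exists [:: false; false], b; split => //.
have nA : forall c, ~~ infix [:: c; false; false] v.
  by case; apply/negP => H; rewrite H ?orbT in A.
set e := nth false v m.+3.
case B: (infix [:: e; false] v || infix [:: e; true] v); last first.
  left; apply: leq_trans (num_small (a := e) _) _ => //.
  by case; apply/negP => H; rewrite H ?orbT in B.
have Hlast : exists b, infix [:: e; b] v.
  by case/orP: B => H; [exists false | exists true].
set e2 := nth false v m.+2.
have Dt : drop m.+2 v = [:: e2; e].
  have Sv : size v = m.+4 by rewrite /v /= Hs'.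
  rewrite (@drop_nth _ false m.+2) ?Sv // (@drop_nth _ false m.+3) ?Sv //.
  by rewrite drop_oversize // Sv.
case C: (infix [:: e2; e; false] v || infix [:: e2; e; true] v).
  left; rewrite -E3; apply: num_bound => //.
  have [b Hb] : exists b, infix [:: e2; e; b] v.
    by case/orP: C => H; [exists false | exists true].
  exists [:: e2; e], b; split => //.
  rewrite -Dt; exact: suffix_drop.
have nC : forall b, ~~ infix [:: e2; e; b] v.
  by case; apply/negP => H; rewrite H ?orbT in C.
apply: (caseD (q := i.+3)) => //.
rewrite /=; case: i Hi Hni Hj => // i Hi Hni Hj /=; exact: Hj.
Qed.

Theorem mainTheorem4 (n : nat) : 4 <= n ->
  lex_smallest_highly_bispecial n
    (if n == 6 then [:: false; false; true; false; true; true]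
     else [:: false; false] ++ nseq (n - 3) true ++ [:: false]).
Proof.
case: n => [|[|[|[|m]]]] // _.
have -> : m.+4 - 3 = m.+1 by lia.
case: (eqVneq m 2) => [-> | Hm].
  rewrite /=.
  set W6 := [:: false; false; true; false; true; true].
  have N6 : num_bispecial W6 = 4 by vm_compute.
  split => //.
    move=> v Hv; rewrite N6; have := upper_bound (w := v); rewrite Hv; apply => //.
  move=> v Hv Hh.
  have Hge := Hh W6 (ltac:(by rewrite Hv)).
  case: (boolP (lex_le W6 v)) => // Hl.
  have Hl2 : ~~ lex_le (Wg 2) v.
    apply/negP => H; move/negP: Hl; apply.
    exact: lex_le_trans (_ : lex_le W6 (Wg 2)) H.
  case: (smaller_bad Hv Hl2) => [Hle | Ev]; last by rewrite Ev in Hl.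
  by move: (leq_trans Hge Hle); rewrite N6.
have Hm' : (m.+4 == 6) = false by rewrite !eqSS (negbTE Hm).
rewrite Hm'.
have Sz : size (Wg m) = m.+4 by rewrite /Wg !size_cat size_nseq /=; lia.
split => //.
  move=> v Hv; have := upper_bound (w := v); rewrite Hv => /(_ erefl) H.
  apply: leq_trans H _; apply: leq_trans _ (lower m); rewrite !size_cat size_nseq /=; lia.
move=> v Hv Hh.
have Hge := leq_trans (lower m) (Hh (Wg m) (ltac:(by rewrite Hv))).
case: (boolP (lex_le (Wg m) v)) => // Hl.
case: (smaller_bad Hv Hl) => [Hle | Ev].
  by move: (leq_trans Hge Hle); rewrite ltnn.
move: Hv; rewrite Ev /= => Hv.
have Em : m = 2 by lia.
by rewrite Em in Hm.
Qed.
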